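(* Let $L>0$ be even and $A=\{x\in\{0,1\}^L: x_1+\dots+x_L=L/2\}$. Let $g:A\to A$ be an arbitrary function. Then there exist $m>0$ and a Boolean network with inputs $B$, with designated input variables $a=(a_1,\dots,a_L)$, $d=(d_1,d_2)$ and designated output variables $c=(c_1,\dots,c_L)$, such that for every time $t$, every input sequence, and every initial condition of $B$, whenever $a(t)\in A$ we have $c(t+m)=a(t)$ if $d(t)=(0,1)$, and $c(t+m)=g(a(t))$ if $d(t)=(1,0)$. Moreover $B$ is cooperative, every node of its digraph has indegree and outdegree at most $2$, every input variable has indegree $0$ and every output variable has outdegree $0$.
   Context: A Boolean network with inputs consists of finitely many Boolean variables, some designated as input variables whose values at each time are prescribed externally (arbitrarily), and the remaining (internal) variables, each updated simultaneously at each discrete time step by $x(t)=f_x(\text{values of all variables at time } t-1)$ for a Boolean function $f_x$; output variables are designated internal variables. It is cooperative if every update function $f_x$ is monotone nondecreasing with respect to the componentwise order (equivalently, expressible using only $\wedge$ and $\vee$). Its digraph has an arc from variable $y$ to internal variable $x$ iff $f_x$ actually depends on $y$ (flipping $y$ from $0$ to $1$ with all else fixed can raise $f_x$ from $0$ to $1$). *)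

(* Defs.v *)
From mathcomp Require Import all_boot.
Set Implicit Arguments. Unset Strict Implicit. Unset Printing Implicit Defensive.

(* Input variables: inl i = a_(i+1) (i : 'I_L), inr j = d_(j+1) (j : 'I_2).
   Internal variables: 'I_n.  All variables: (input + internal). *)
Definition inVar (L : nat) := ('I_L + 'I_2)%type.
Definition var (L n : nat) := (inVar L + 'I_n)%type.

Definition inA (L : nat) (x : {ffun 'I_L -> bool}) : bool :=
  (\sum_(i < L) (x i : nat)) == L./2.

Definition network (L n : nat) := 'I_n -> ({ffun var L n -> bool} -> bool).

Definition leB (V : finType) (s s' : {ffun V -> bool}) : Prop :=
  forall v, s v ==> s' v.

Definition cooperative L n (f : network L n) : Prop :=
  forall i s s', leB s s' -> f i s ==> f i s'.

Definition depends (V : finType) (F : {ffun V -> bool} -> bool) (y : V) : bool :=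
  [exists s : {ffun V -> bool},
     [&& ~~ s y, ~~ F s & F [ffun v => if v == y then true else s v]]].

Definition arc L n (f : network L n) (y : var L n) (x : 'I_n) : bool :=
  depends (f x) y.

Definition indeg L n (f : network L n) (v : var L n) : nat :=
  match v with
  | inl _ => 0
  | inr x => #|[set y | arc f y x]|
  end.

Definition outdeg L n (f : network L n) (y : var L n) : nat :=
  #|[set x | arc f y x]|.

Definition stateAt L n (u : nat -> inVar L -> bool) (x : nat -> 'I_n -> bool) (t : nat)
  : {ffun var L n -> bool} :=
  [ffun v => match v with inl j => u t j | inr k => x t k end].

Definition trajectory L n (f : network L n) (u : nat -> inVar L -> bool)
  (x : nat -> 'I_n -> bool) : Prop :=
  forall t i, x t.+1 i = f i (stateAt u x t).

Definition a_at L (u : nat -> inVar L -> bool) (t : nat) : {ffun 'I_L -> bool} :=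
  [ffun i => u t (inl i)].

Definition d_at L (u : nat -> inVar L -> bool) (t : nat) : bool * bool :=
  (u t (inr ord0), u t (inr (@Ordinal 2 1 isT))).

Definition c_at L n (c : 'I_L -> 'I_n) (x : nat -> 'I_n -> bool) (t : nat)
  : {ffun 'I_L -> bool} :=
  [ffun i => x t (c i)].

(* Main.v *)
Require Import Defs.
From mathcomp Require Import all_boot.
From Stdlib Require Import Lia.
Set Implicit Arguments. Unset Strict Implicit. Unset Printing Implicit Defensive.

Lemma depends_only (V : finType) (F : {ffun V -> bool} -> bool) (Q : pred V) (y : V) :
  (forall s s' : {ffun V -> bool}, (forall z, Q z -> s z = s' z) -> F s = F s') ->
  depends F y -> Q y.
Proof.
move=> HF /existsP [s /and3P [sy Fs Fs']].
apply/negPn/negP => Qy; move: Fs; rewrite (HF s [ffun v => if v == y then true else s v]) ?Fs' //.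
move=> z Qz; rewrite ffunE; case: eqP => // zy; subst z; by rewrite Qz in Qy.
Qed.

Lemma card2 (T : finType) (P : pred T) a b :
  (forall y, P y -> y = a \/ y = b) -> #|[set y | P y]| <= 2.
Proof.
move=> H; apply: leq_trans (_ : #|[set a; b]| <= 2); last by rewrite cards2; case: (a != b).
apply: subset_leq_card; apply/subsetP => y; rewrite inE => /H [->|->];
  by rewrite !inE eqxx ?orbT.
Qed.

Definition NN (L : nat) := #|{: inVar L}|.
Definition ev (L : nat) (w : nat) : option (inVar L) := nth None (map Some (enum {: inVar L})) w.
Definition setOf (L : nat) (k : nat) : {set inVar L} := nth set0 (enum {: {set inVar L}}) k.
Definition qq L := NN L + L.
Definition KK L := 2 ^ qq L.
Definition MM L := 2 ^ NN L.
Definition WW L := MM L * KK L.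
Definition DD L := (qq L + NN L + NN L + 2).+1.
Definition nn' L := DD L * WW L.

Definition ord1' : 'I_2 := @Ordinal 2 1 isT.

Definition Target L (g : {ffun 'I_L -> bool} -> {ffun 'I_L -> bool}) (i : 'I_L)
  (A : {set inVar L}) : bool :=
  let a := [ffun j => inl j \in A] in
  let d1 := inr ord0 \in A in let d2 := inr ord1' \in A in
  inA a && ((~~ d1 && d2 && a i) || (d1 && ~~ d2 && g a i)).

Definition Pred L g (k : nat) : bool :=
  match (insub (k %/ MM L) : option 'I_L) with
  | Some i => Target g i (setOf L (k %% MM L))
  | None => false end.

Definition keep1 L w : bool :=
  match ev L (w %/ KK L) with Some v => v \in setOf L ((w %% KK L) %% MM L) | None => false end.
Definition keep2 L g w : bool := Pred (L:=L) g (w %% KK L).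

Definition dd L l := if l <= qq L + NN L + 1 then KK L * 2 ^ (l - (qq L).+2)
  else 2 ^ (l - (qq L + NN L + 3)).
Definition rp1 L l w := if l <= qq L then w./2 else w.
Definition rp2 L l w := if l <= qq L then w./2 else if dd L l <= w then w - dd L l else w.

Definition node L (g : {ffun 'I_L -> bool} -> {ffun 'I_L -> bool}) l w (inp : inVar L -> bool) (r : nat -> bool) : bool :=
 if DD L <= l then false
 else if l == 0 then (if ev L w is Some v then inp v else false)
 else if l <= qq L then r (rp1 L l w)
 else if l == (qq L).+1 then (if keep1 L w then r (rp1 L l w) else true)
 else if l <= qq L + NN L + 1 then r (rp1 L l w) && r (rp2 L l w)
 else if l == qq L + NN L + 2 then (if keep2 g w then r (rp1 L l w) else false)
 else r (rp1 L l w) || r (rp2 L l w).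

Definition idx L (l w : nat) : 'I_(nn' L).+1 := inord (l * WW L + w).

Definition fnet L g : network L (nn' L).+1 := fun x s =>
  node g (x %/ WW L) (x %% WW L) (fun v => s (inl v)) (fun p => s (inr (idx L (x %/ WW L).-1 p))).

Fixpoint sem L g (l w : nat) (inp : inVar L -> bool) : bool :=
  match l with
  | 0 => node g 0 w inp (fun _ => false)
  | l'.+1 => node g l'.+1 w inp (fun p => sem g l' p inp)
  end.

Definition pos L (i : 'I_L) := (MM L).-1 * KK L + (i * MM L + (MM L).-1).
Definition cout L (i : 'I_L) := idx L (DD L).-1 (pos i).

Lemma WW_gt0 L : 0 < WW L.
Proof. by rewrite /WW /MM /KK muln_gt0 !expn_gt0. Qed.

Lemma idx_val L l w : l < DD L -> w < WW L -> (idx L l w : nat) = l * WW L + w.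
Proof.
move=> hl hw; rewrite /idx inordK // ltnS /nn'.
apply: leq_trans (_ : l.+1 * WW L <= _); first by rewrite mulSnr leq_add2l ltnW.
by rewrite leq_mul2r hl orbT.
Qed.

Lemma divWW L l w : w < WW L -> (l * WW L + w) %/ WW L = l.
Proof. by move=> hw; rewrite divnMDl ?WW_gt0 // divn_small // addn0. Qed.

Lemma modWW L l w : w < WW L -> (l * WW L + w) %% WW L = w.
Proof. by move=> hw; rewrite modnMDl modn_small. Qed.

Lemma idx_eta L (x : 'I_(nn' L).+1) : x = idx L (x %/ WW L) (x %% WW L).
Proof. by apply: val_inj; rewrite /idx /= inordK -?divn_eq. Qed.

Lemma x_layer L (x : 'I_(nn' L).+1) : x %/ WW L <= DD L.
Proof.
have := ltn_ord x; rewrite ltnS /nn' => h.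
by rewrite (leq_trans (leq_div2r _ h)) // mulnK ?WW_gt0.
Qed.

Lemma rp1_le L l w : rp1 L l w <= w.
Proof. by rewrite /rp1; case: ifP => // _; rewrite -divn2 leq_div. Qed.
Lemma rp2_le L l w : rp2 L l w <= w.
Proof. rewrite /rp2; case: ifP => _; first by rewrite -divn2 leq_div.
by case: ifP => // _; rewrite leq_subr. Qed.

Lemma node_ext2 L g l w inp inp' r r' :
  (l = 0 -> forall v, ev L w = Some v -> inp v = inp' v) ->
  (l != 0 -> r (rp1 L l w) = r' (rp1 L l w)) ->
  (l != 0 -> r (rp2 L l w) = r' (rp2 L l w)) ->
  @node L g l w inp r = node g l w inp' r'.
Proof.
move=> hi e1 e2.
rewrite /node; case: eqP => [/hi {}hi|/eqP ne]; last by rewrite e1 ?e2.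
by case: (ev L w) (hi) => [v|] // /(_ v erefl) ->.
Qed.

Lemma node_ext L g l w inp inp' r r' :
  (l = 0 -> forall v, inp v = inp' v) -> (forall p, p <= w -> r p = r' p) ->
  @node L g l w inp r = node g l w inp' r'.
Proof.
move=> hi hr; apply: node_ext2 => [/hi h v _ //|_|_]; by rewrite ?hr ?rp1_le ?rp2_le.
Qed.

Lemma traj L g (u : nat -> inVar L -> bool) x :
  trajectory (fnet g) u x -> forall t l w, l < DD L -> w < WW L ->
  x (t + l.+1) (idx L l w) = sem g l w (u t).
Proof.
move=> hx t; elim=> [|l IH] w hl hw.
  rewrite addn1 hx /fnet idx_val // divWW // modWW //=.
  rewrite /node; case: ifP => // _; rewrite eqxx; case: (ev L w) => [v|//]; by rewrite ffunE.
rewrite addnS hx /fnet idx_val // divWW // modWW //=.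
apply: node_ext => [//|p hp]; rewrite ffunE /=.
by rewrite IH // ?(ltnW hl) // (leq_ltn_trans hp hw).
Qed.

Lemma node_mono L g l w inp inp' r r' :
  (forall v, inp v ==> inp' v) -> (forall p, r p ==> r' p) ->
  @node L g l w inp r ==> node g l w inp' r'.
Proof.
move=> hi hr; rewrite /node.
case: ifP => _ //.
case: ifP => _; first by case: (ev L w).
case: ifP => _; first exact: hr.
case: ifP => _; first by case: ifP.
case: ifP => _.
  by apply/implyP => /andP[/(implyP (hr _)) -> /(implyP (hr _)) ->].
case: ifP => _; first by case: ifP.
by apply/implyP => /orP [/(implyP (hr _)) -> // | /(implyP (hr _)) ->]; rewrite orbT.
Qed.

Lemma coop L g : cooperative (@fnet L g).
Proof.
move=> x s s' h; apply: node_mono => [v|p]; exact: h.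
Qed.

Definition reads L (x : 'I_(nn' L).+1) (y : var L (nn' L).+1) : bool :=
  let l := x %/ WW L in let w := x %% WW L in
  (l < DD L) && (if l == 0 then (if ev L w is Some v then y == inl v else false)
   else (y == inr (idx L l.-1 (rp1 L l w))) || (y == inr (idx L l.-1 (rp2 L l w)))).

Lemma fnet_reads L g x (s s' : {ffun var L (nn' L).+1 -> bool}) :
  (forall y, reads x y -> s y = s' y) -> fnet g x s = fnet g x s'.
Proof.
move=> h; rewrite /fnet.
case: (ltnP (x %/ WW L) (DD L)) => hl; last by rewrite /node hl.
apply: node_ext2.
- move=> e v hev; apply: h; by rewrite /reads /= hl e hev /= !eqxx.
- move=> e; apply: h; by rewrite /reads /= hl (negbTE e) eqxx.
- move=> e; apply: h; by rewrite /reads /= hl (negbTE e) eqxx orbT.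
Qed.

Lemma arc_reads L g y x : Defs.arc (@fnet L g) y x -> reads x y.
Proof. by apply: depends_only => s s'; apply: fnet_reads. Qed.

Lemma size_enumV L : size (enum {: inVar L}) = NN L.
Proof. by rewrite /NN cardE. Qed.

Lemma ev_index L (v : inVar L) : ev L (index v (enum {: inVar L})) = Some v.
Proof.
by rewrite /ev (nth_map v) ?nth_index ?mem_enum // size_enumV -size_enumV index_mem mem_enum.
Qed.

Lemma ev_Some L w v : ev L w = Some v -> w = index v (enum {: inVar L}).
Proof.
rewrite /ev; case: (ltnP w (size (enum {: inVar L}))) => hw.
  by rewrite (nth_map v) // => -[<-]; rewrite index_uniq ?enum_uniq.
by rewrite nth_default // size_map.
Qed.

Lemma index_lt L (v : inVar L) : index v (enum {: inVar L}) < NN L.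
Proof. by rewrite -size_enumV index_mem mem_enum. Qed.

Lemma ltn_modW L (x : nat) : x %% WW L < WW L.
Proof. by rewrite ltn_pmod ?WW_gt0. Qed.

Lemma indeg_le L g v : indeg (@fnet L g) v <= 2.
Proof.
case: v => [//|x] /=.
pose a := if x %/ WW L == 0 then (if ev L (x %% WW L) is Some v then inl v else inr x)
          else inr (idx L (x %/ WW L).-1 (rp1 L (x %/ WW L) (x %% WW L))).
pose b := if x %/ WW L == 0 then (if ev L (x %% WW L) is Some v then inl v else inr x)
          else inr (idx L (x %/ WW L).-1 (rp2 L (x %/ WW L) (x %% WW L))).
apply: (@card2 _ _ a b) => y /arc_reads; rewrite /reads /= /a /b.
case/andP=> _; case: eqP => _.
  by case: (ev L _) => // v /eqP ->; left.
by case/orP => /eqP ->; auto.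
Qed.

Lemma reads_inr L (x : 'I_(nn' L).+1) z : reads x (inr z) ->
  [/\ 0 < x %/ WW L, x %/ WW L < DD L, z %/ WW L = (x %/ WW L).-1 &
   (z %% WW L = rp1 L (x %/ WW L) (x %% WW L) \/ z %% WW L = rp2 L (x %/ WW L) (x %% WW L))].
Proof.
rewrite /reads /=; case/andP=> hl; case: eqP => [_|/eqP l0].
  by case: (ev L _).
have hl' : (x %/ WW L).-1 < DD L by rewrite (leq_ltn_trans (leq_pred _)).
have h1 := leq_ltn_trans (rp1_le L (x %/ WW L) (x %% WW L)) (ltn_modW L x).
have h2 := leq_ltn_trans (rp2_le L (x %/ WW L) (x %% WW L)) (ltn_modW L x).
rewrite lt0n l0; case/orP => /eqP [->]; rewrite idx_val // divWW // modWW //;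
  by split => //; auto.
Qed.

Lemma outdeg_le L g y : outdeg (@fnet L g) y <= 2.
Proof.
rewrite /outdeg; case: y => [v|z].
  apply: (@card2 _ _ (idx L 0 (index v (enum {: inVar L})))
                     (idx L 0 (index v (enum {: inVar L})))) => x /arc_reads.
  rewrite /reads /=; case/andP=> hl; case: eqP => [l0|_] //.
  case e: (ev L _) => [v'|//] /eqP [vv]; subst v'; left.
  by rewrite {1}(idx_eta x) l0 -(ev_Some e).
pose lz := z %/ WW L; pose wz := z %% WW L.
apply: (@card2 _ _ (idx L lz.+1 (if lz.+1 <= qq L then wz.*2 else wz))
     (idx L lz.+1 (if lz.+1 <= qq L then wz.*2.+1 else wz + dd L lz.+1))) => x.
move=> /arc_reads /reads_inr [l0 hl ez H].
have ex : x %/ WW L = lz.+1 by rewrite /lz ez prednK.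
have -> : x = idx L lz.+1 (x %% WW L) by rewrite {1}(idx_eta x) ex.
suff : x %% WW L = (if lz.+1 <= qq L then wz.*2 else wz) \/
       x %% WW L = (if lz.+1 <= qq L then wz.*2.+1 else wz + dd L lz.+1).
  by case=> <-; auto.
move: H; rewrite ex /rp1 /rp2 -/wz.
move: (x %% WW L) => w.
case: ifP => hq.
  move=> H; have {}H : wz = w./2 by case: H.
  rewrite H; have := odd_double_half w; case: (odd w) => /= e.
    by right; rewrite -add1n e.
  by left; rewrite -[in LHS]e add0n.
case: ifP => hd [] ->; auto.
by right; rewrite subnK.
Qed.

Lemma pos_lt L (i : 'I_L) : pos i < WW L.
Proof.
rewrite /pos /WW.
have hM : 0 < MM L by rewrite expn_gt0.
have hK : i * MM L + (MM L).-1 < KK L.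
  apply: leq_trans (_ : i.+1 * MM L <= _).
    by rewrite mulSnr ltn_add2l ltn_predL.
  rewrite /KK /qq expnD mulnC /MM leq_pmul2l ?expn_gt0 //.
  exact: ltn_trans (ltn_ord i) (ltn_expl L (isT : 1 < 2)).
apply: leq_trans (_ : (MM L).-1 * KK L + KK L <= _); first by rewrite ltn_add2l.
by rewrite -mulSnr prednK.
Qed.

Lemma outdeg_out L g (i : 'I_L) : outdeg (@fnet L g) (inr (cout i)) = 0.
Proof.
apply/eqP; rewrite cards_eq0; apply/eqP/setP => x; rewrite in_set in_set0; apply/negbTE.
apply/negP => /arc_reads /reads_inr [l0 hl ez _].
move: ez; rewrite /cout idx_val ?pos_lt // divWW ?pos_lt // => e.
by move: hl; rewrite -(prednK l0) -e /DD /= ltnn.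
Qed.

Definition allred (h : nat -> bool) B e w := [forall c : 'I_(2 ^ e), (c * B <= w) ==> h (w - c * B)].
Definition exred (h : nat -> bool) B e w := ~~ allred (fun x => ~~ h x) B e w.

Lemma allredP (h : nat -> bool) B e w :
  reflect (forall c, c < 2 ^ e -> c * B <= w -> h (w - c * B)) (allred h B e w).
Proof.
apply: (iffP forallP) => H c; first by move=> hc; exact: (implyP (H (Ordinal hc))).
by apply/implyP; exact: H c (ltn_ord c).
Qed.

Lemma allred0 (h : nat -> bool) B w : allred h B 0 w = h w.
Proof.
apply/allredP/idP => [H|hw c]; first by have := H 0 isT; rewrite mul0n subn0; apply.
by rewrite expn0 ltnS leqn0 => /eqP -> _; rewrite mul0n subn0.
Qed.

Lemma allredS (h : nat -> bool) B e w : allred h B e.+1 w =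
  allred h B e w && (if B * 2 ^ e <= w then allred h B e (w - B * 2 ^ e) else true).
Proof.
have hE : 2 ^ e.+1 = 2 ^ e + 2 ^ e by rewrite expnS mul2n addnn.
apply/allredP/andP => [H|[/allredP H1 H2]].
  split; first by apply/allredP => c hc; apply: H; rewrite hE ltn_addr.
  case: ifP => // hw; apply/allredP => c hc hcw.
  have := H (2 ^ e + c); rewrite hE ltn_add2l mulnDl [2 ^ e * B]mulnC subnDA.
  by apply => //; rewrite -leq_subRL.
move=> c hc hcw; case: (ltnP c (2 ^ e)) => hce; first exact: H1.
have hw : B * 2 ^ e <= w.
  by apply: leq_trans hcw; rewrite mulnC leq_mul2r hce orbT.
move: H2; rewrite hw => /allredP H2.
have := H2 (c - 2 ^ e); rewrite -subnDA [B * 2 ^ e]mulnC -mulnDl subnKC //.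
apply; first by rewrite ltn_subLR // -hE.
by rewrite leq_subRL -?mulnDl ?subnKC // mulnC.
Qed.

Lemma allred_top (h : nat -> bool) B e k : allred h B e ((2 ^ e).-1 * B + k) = [forall v : 'I_(2 ^ e), h (v * B + k)].
Proof.
set P := (2 ^ e).-1.
have hP : P < 2 ^ e by rewrite ltn_predL expn_gt0.
apply/allredP/forallP => [H v|H c hc hcw].
  have hv : v <= P by rewrite -ltnS prednK ?expn_gt0.
  have := H (P - v); rewrite mulnBl subnBA ?leq_mul2r ?hv ?orbT //.
  rewrite -addnA addKn [k + _]addnC; apply.
    exact: leq_ltn_trans (leq_subr _ _) hP.
  exact: leq_trans (leq_subr _ _) (leq_addr _ _).
have hc' : c <= P by rewrite -ltnS prednK ?expn_gt0.
have := H (Ordinal (leq_ltn_trans (leq_subr c P) hP)) => /=.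
by rewrite mulnBl addnBAC // leq_mul2r hc' orbT.
Qed.

Lemma exredS (h : nat -> bool) B e w : exred h B e.+1 w =
  exred h B e w || (if B * 2 ^ e <= w then exred h B e (w - B * 2 ^ e) else false).
Proof. by rewrite /exred allredS negb_and; case: ifP. Qed.

Lemma exred0 (h : nat -> bool) B w : exred h B 0 w = h w.
Proof. by rewrite /exred allred0 negbK. Qed.

Lemma exred_top (h : nat -> bool) B e k : exred h B e ((2 ^ e).-1 * B + k) = [exists v : 'I_(2 ^ e), h (v * B + k)].
Proof.
rewrite /exred allred_top negb_forall; apply: eq_existsb => v; by rewrite negbK.
Qed.

Ltac slia := unfold DD in *; repeat match goal with
 | H : is_true (_ <= _) |- _ => move/leP: H; rewrite -?plusE -?minusE => H
 | H : is_true (_ == _) |- _ => move/eqP: H; rewrite -?plusE -?minusE => H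
 end;
 match goal with
 | |- is_true (_ && _) => apply/andP; split; slia
 | |- is_true (_ <= _) => apply/leP; rewrite -?plusE -?minusE; lia
 | |- (_ <= _) = false => apply/negP => /leP; rewrite -?plusE -?minusE => ?; lia
 | |- (_ == _) = false => apply/negP => /eqP; rewrite -?plusE -?minusE => ?; lia
 | |- _ => rewrite -?plusE -?minusE; lia
 end.

Section Phases.
Variables (L : nat) (g : {ffun 'I_L -> bool} -> {ffun 'I_L -> bool}).
Variables (w : nat) (inp : inVar L -> bool) (r : nat -> bool).

Lemma node_half l : 0 < l <= qq L -> node g l w inp r = r (w./2).
Proof.
case/andP=> h1 h2; rewrite /node /rp1 h2.
rewrite (_ : (DD L <= l) = false); last by slia.
by rewrite (_ : (l == 0) = false); last by slia.
Qed.

Lemma node_m1 : node g (qq L).+1 w inp r = if keep1 L w then r w else true.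
Proof.
rewrite /node /rp1 ltnn eqxx /=.
by rewrite (_ : (DD L <= (qq L).+1) = false); last by slia.
Qed.

Lemma node_and l : (qq L).+1 < l <= qq L + NN L + 1 ->
  node g l w inp r = r w && (if dd L l <= w then r (w - dd L l) else true).
Proof.
case/andP=> h1 h2; rewrite /node /rp1 /rp2 h2.
rewrite (_ : (DD L <= l) = false); last by slia.
rewrite (_ : (l == 0) = false); last by slia.
rewrite (_ : (l <= qq L) = false); last by slia.
rewrite (_ : (l == (qq L).+1) = false); last by slia.
by case: ifP => //; rewrite andbb andbT.
Qed.

Lemma node_m2 : node g (qq L + NN L + 2) w inp r = if keep2 g w then r w else false.
Proof.
rewrite /node /rp1 eqxx.
rewrite (_ : (DD L <= qq L + NN L + 2) = false); last by slia.
rewrite (_ : (qq L + NN L + 2 == 0) = false); last by slia.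
rewrite (_ : (qq L + NN L + 2 <= qq L) = false); last by slia.
rewrite (_ : (qq L + NN L + 2 == (qq L).+1) = false); last by slia.
by rewrite (_ : (qq L + NN L + 2 <= qq L + NN L + 1) = false); last by slia.
Qed.

Lemma node_or l : qq L + NN L + 2 < l < DD L ->
  node g l w inp r = r w || (if dd L l <= w then r (w - dd L l) else false).
Proof.
case/andP=> h1 h2; rewrite /node /rp1 /rp2.
rewrite (_ : (DD L <= l) = false); last by slia.
rewrite (_ : (l == 0) = false); last by slia.
rewrite (_ : (l <= qq L) = false); last by slia.
rewrite (_ : (l == (qq L).+1) = false); last by slia.
rewrite (_ : (l <= qq L + NN L + 1) = false); last by slia.
rewrite (_ : (l == qq L + NN L + 2) = false); last by slia.
by case: ifP => //; rewrite orbb orbF.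
Qed.
End Phases.

Section Sem.
Variables (L : nat) (g : {ffun 'I_L -> bool} -> {ffun 'I_L -> bool}) (s : inVar L -> bool).

Lemma sem_S l w : sem g l.+1 w s = node g l.+1 w s (fun p => sem g l p s).
Proof. by []. Qed.

Lemma sem0 w : sem g 0 w s = if ev L w is Some v then s v else false.
Proof. by rewrite /= /node /DD /=. Qed.

Lemma sem_half j w : j <= qq L -> sem g j w s = sem g 0 (w %/ 2 ^ j) s.
Proof.
elim: j w => [|j IH] w hj; first by rewrite expn0 divn1.
rewrite sem_S node_half ?hj // IH ?(ltnW hj) //.
by rewrite expnS divnMA divn2.
Qed.

Lemma sem_m1 w : sem g (qq L).+1 w s = if keep1 L w then sem g 0 (w %/ KK L) s else true.
Proof. by rewrite sem_S node_m1 sem_half. Qed.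

Lemma sem_and j w : j <= NN L ->
  sem g ((qq L).+1 + j) w s = allred (fun p => sem g (qq L).+1 p s) (KK L) j w.
Proof.
elim: j w => [|j IH] w hj; first by rewrite addn0 allred0.
rewrite addnS sem_S node_and; last by slia.
have -> : dd L ((qq L).+1 + j).+1 = KK L * 2 ^ j.
  rewrite /dd ifT; last by slia.
  by congr (_ * 2 ^ _); slia.
by rewrite !IH ?(ltnW hj) // allredS.
Qed.

Lemma sem_m2 w : sem g (qq L + NN L + 2) w s =
  keep2 g w && allred (fun p => sem g (qq L).+1 p s) (KK L) (NN L) w.
Proof.
have E : qq L + NN L + 2 = ((qq L).+1 + NN L).+1 by slia.
rewrite [in LHS]E sem_S -E node_m2 sem_and //; by case: keep2.
Qed.

Lemma sem_or j w : j <= NN L ->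
  sem g (qq L + NN L + 2 + j) w s = exred (fun p => sem g (qq L + NN L + 2) p s) 1 j w.
Proof.
elim: j w => [|j IH] w hj; first by rewrite addn0 exred0.
rewrite addnS sem_S node_or; last by slia.
have -> : dd L (qq L + NN L + 2 + j).+1 = 2 ^ j.
  rewrite /dd ifF; last by slia.
  by congr (2 ^ _); slia.
by rewrite !IH ?(ltnW hj) // exredS mul1n.
Qed.
End Sem.

Lemma MM_gt0 L : 0 < MM L. Proof. by rewrite expn_gt0. Qed.
Lemma KK_gt0 L : 0 < KK L. Proof. by rewrite expn_gt0. Qed.

Lemma small_lt L (i : 'I_L) S : S < MM L -> i * MM L + S < KK L.
Proof.
move=> hS; apply: leq_trans (_ : i.+1 * MM L <= _); first by rewrite mulSnr ltn_add2l.
rewrite /KK /qq expnD mulnC /MM leq_pmul2l ?expn_gt0 //.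
exact: ltn_trans (ltn_ord i) (ltn_expl L (isT : 1 < 2)).
Qed.

Lemma card_sets L : #|{: {set inVar L}}| = MM L.
Proof. by rewrite -cardsT -powersetT card_powerset cardsT. Qed.

Ltac cl := rewrite ?/MM; first [exact: ltn_ord | assumption].

Lemma Pred_val L g (i : 'I_L) S : S < MM L -> Pred g (i * MM L + S) = Target g i (setOf L S).
Proof.
move=> hS; rewrite /Pred divnMDl ?MM_gt0 // divn_small // addn0 valK.
by rewrite modnMDl modn_small.
Qed.

Lemma keep2_val L g (i : 'I_L) S : S < MM L ->
  keep2 g ((MM L).-1 * KK L + (i * MM L + S)) = Target g i (setOf L S).
Proof.
move=> hS; rewrite /keep2 modnMDl modn_small ?Pred_val //; exact: small_lt.
Qed.

Lemma m1_val L g s v k : k < KK L ->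
  sem g (qq L).+1 (v * KK L + k) s =
  if ev L v is Some vv then (vv \in setOf L (k %% MM L)) ==> s vv else true.
Proof.
move=> hk; rewrite sem_m1 /keep1 divnMDl ?KK_gt0 // divn_small // addn0.
rewrite modnMDl (modn_small hk). rewrite sem0.
by case: (ev L v) => // vv; case: ifP.
Qed.

Lemma out_char L g (i : 'I_L) s : sem g (DD L).-1 (pos i) s =
  [exists A : {set inVar L}, Target g i A && [forall v, (v \in A) ==> s v]].
Proof.
have -> : (DD L).-1 = qq L + NN L + 2 + NN L by rewrite /DD /=; slia.
rewrite sem_or //.
have -> : pos i = (2 ^ NN L).-1 * 1 + ((MM L).-1 * KK L + i * MM L).
  by rewrite /pos muln1 /MM [RHS]addnCA [(2 ^ NN L).-1 + _]addnC.
rewrite exred_top.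
apply/existsP/existsP => [[S]|[A]].
  have hS : S < MM L by exact: ltn_ord.
  rewrite muln1 addnCA [nat_of_ord S + _]addnC sem_m2 allred_top keep2_val //.
  case/andP=> hT /forallP hall; exists (setOf L S); rewrite hT andTb.
  apply/forallP => v; apply/implyP => hv.
  have hx := index_lt v.
  have := hall (Ordinal (ltn_trans hx (ltn_expl _ (isT : 1 < 2)))).
  rewrite m1_val /= ?small_lt // ev_index modnMDl modn_small // hv.
  by apply.
case/andP=> hT /forallP hall.
have hS : index A (enum {: {set inVar L}}) < 2 ^ NN L.
  by rewrite -/(MM L) -card_sets cardE index_mem mem_enum.
exists (Ordinal hS).
have eA : setOf L (index A (enum {: {set inVar L}})) = A by rewrite /setOf nth_index ?mem_enum.
rewrite /= muln1 addnCA [index _ _ + _]addnC sem_m2 allred_top keep2_val //.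
rewrite eA hT andTb; apply/forallP => v.
rewrite m1_val ?small_lt // modnMDl modn_small // eA.
case e: (ev L v) => [vv|//].
exact: hall.
Qed.

Lemma bal L (a a' : {ffun 'I_L -> bool}) :
  inA a -> inA a' -> (forall j, a' j ==> a j) -> a' = a.
Proof.
rewrite /inA => /eqP ha /eqP ha' H; apply/ffunP => j.
case: (boolP (a' j == a j)) => [/eqP //|ne].
have [h1 h2] : a' j = false /\ a j = true.
  by move: (H j) ne; case: (a' j); case: (a j).
have : \sum_(i < L) (a' i : nat) < \sum_(i < L) (a i : nat).
  rewrite (bigD1 j) //= [X in _ < X](bigD1 j) //= h1 h2 add0n add1n ltnS.
  by apply: leq_sum => i _; move: (H i); case: (a' i); case: (a i).
by rewrite ha ha' ltnn.
Qed.

Lemma final L (g : {ffun 'I_L -> bool} -> {ffun 'I_L -> bool}) (i : 'I_L) (s : inVar L -> bool) :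
  inA [ffun j => s (inl j)] ->
  (s (inr ord0) = false -> s (inr ord1') = true ->
    [exists A : {set inVar L}, Target g i A && [forall v, (v \in A) ==> s v]] = s (inl i)) /\
  (s (inr ord0) = true -> s (inr ord1') = false ->
    [exists A : {set inVar L}, Target g i A && [forall v, (v \in A) ==> s v]] =
    g [ffun j => s (inl j)] i).
Proof.
move=> hA.
have key : forall A : {set inVar L}, Target g i A -> [forall v, (v \in A) ==> s v] ->
  [ffun j => inl j \in A] = [ffun j => s (inl j)] /\
  ((inr ord0 \in A) ==> s (inr ord0)) /\ ((inr ord1' \in A) ==> s (inr ord1')).
  move=> A /andP [hA' _] /forallP hs; split; last by split; apply: hs.
  by apply: bal => // j; rewrite !ffunE; apply: hs.
have hT : Target g i [set v | s v] = inA [ffun j => s (inl j)] &&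
   ((~~ s (inr ord0) && s (inr ord1') && s (inl i)) ||
    (s (inr ord0) && ~~ s (inr ord1') && g [ffun j => s (inl j)] i)).
  rewrite /Target !inE; set a := [ffun j => _]; set b := [ffun j => _].
  have -> : a = b by apply/ffunP => j; rewrite !ffunE inE.
  by rewrite /b ffunE.
split => e1 e2.
  apply/existsP/idP => [[A /andP [hT' hs]]|hi].
    have [ea [h0 h1]] := key A hT' hs.
    move: hT'; rewrite /Target ea; rewrite e1 in h0.
    case: (inr ord0 \in A) h0 => //= _.
    by case/andP => _; rewrite orbF => /andP [_]; rewrite ffunE.
  exists [set v | s v]; rewrite hT hA e1 e2 hi /=.
  by apply/forallP => v; rewrite inE implybb.
apply/existsP/idP => [[A /andP [hT' hs]]|hi].
  have [ea [h0 h1]] := key A hT' hs.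
  move: hT'; rewrite /Target ea; rewrite e2 in h1.
  case: (inr ord1' \in A) h1 => //= _.
  by rewrite !andbF andbT /=; case/andP => _ /andP [_].
exists [set v | s v]; rewrite hT hA e1 e2 hi /=.
by apply/forallP => v; rewrite inE implybb.
Qed.

Theorem lemma5 (L : nat) (hL : 0 < L) (hev : ~~ odd L)
  (g : {ffun 'I_L -> bool} -> {ffun 'I_L -> bool})
  (hg : forall x, inA x -> inA (g x)) :
  exists (m n : nat) (f : network L n) (c : 'I_L -> 'I_n),
    0 < m /\ injective c /\
    (forall (u : nat -> inVar L -> bool) (x : nat -> 'I_n -> bool),
       trajectory f u x ->
       forall t, inA (a_at u t) ->
         (d_at u t = (false, true) -> c_at c x (t + m) = a_at u t) /\
         (d_at u t = (true, false) -> c_at c x (t + m) = g (a_at u t))) /\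
    cooperative f /\
    (forall v, indeg f v <= 2 /\ outdeg f v <= 2) /\
    (forall k : 'I_L, outdeg f (inr (c k)) = 0).
Proof.
exists (DD L), (nn' L).+1, (fnet g), (@cout L).
split; first by [].
split.
  move=> i j /(congr1 (@nat_of_ord _)); rewrite /cout !idx_val ?pos_lt // => /addnI.
  rewrite /pos => /addnI /addIn /eqP; rewrite eqn_mul2r eqn0Ngt MM_gt0 /= => /eqP.
  exact: val_inj.
split.
  move=> u x hx t hA.
  have E : forall i, c_at (@cout L) x (t + DD L) i = [exists A : {set inVar L},
      Target g i A && [forall v, (v \in A) ==> u t v]].
    move=> i; rewrite ffunE /cout.
    have -> : t + DD L = t + (DD L).-1.+1 by [].
    by rewrite (traj hx) ?pos_lt // out_char.
  have hA' : inA [ffun j => u t (inl j)] by exact: hA.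
  split; rewrite /d_at => -[e1 e2]; apply/ffunP => i; rewrite E;
    have [F1 F2] := final g i hA'.
    by rewrite F1 // ffunE.
  by rewrite F2.
split; first exact: coop.
split; first by move=> v; rewrite indeg_le outdeg_le.
exact: outdeg_out.
Qed.
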